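(* Let $a_1,\dots,a_q,b_1,\dots,b_q>0$ and \[ R(x)=\frac{\prod_{k=1}^{q}(a_k+x)}{\prod_{k=1}^{q}(b_k+x)}. \] Then $R$ is monotone increasing on $(0,\infty)$ if \[ \frac{e_q(b_1,\ldots,b_q)}{e_q(a_1,\ldots,a_q)}\ge\frac{e_{q-1}(b_1,\ldots,b_q)}{e_{q-1}(a_1,\ldots,a_q)}\ge\cdots\ge\frac{e_1(b_1,\ldots,b_q)}{e_1(a_1,\ldots,a_q)}\ge1, \] and monotone decreasing on $(0,\infty)$ if \[ \frac{e_q(b_1,\ldots,b_q)}{e_q(a_1,\ldots,a_q)}\le\frac{e_{q-1}(b_1,\ldots,b_q)}{e_{q-1}(a_1,\ldots,a_q)}\le\cdots\le\frac{e_1(b_1,\ldots,b_q)}{e_1(a_1,\ldots,a_q)}\le1. \]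
   Context: $e_m(c_1,\dots,c_q)=\sum_{1\le i_1<\cdots<i_m\le q}c_{i_1}\cdots c_{i_m}$ denotes the $m$-th elementary symmetric polynomial ($e_0=1$). *)

(* Defs.v *)
From mathcomp Require Import all_boot all_order all_algebra.
Set Implicit Arguments. Unset Strict Implicit. Unset Printing Implicit Defensive.
Import Order.TTheory GRing.Theory Num.Theory.
Local Open Scope ring_scope.

Definition elem_sym {R : comPzRingType} {q : nat} (m : nat) (c : 'I_q -> R) : R :=
  \sum_(S : {set 'I_q} | #|S| == m) \prod_(i in S) c i.

Definition ratfun {R : fieldType} {q : nat} (a b : 'I_q -> R) (x : R) : R :=
  (\prod_(k < q) (a k + x)) / (\prod_(k < q) (b k + x)).

(* Main.v *)
Require Import Defs.
From mathcomp Require Import all_boot all_order all_algebra.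
From mathcomp Require Import ring lra zify.
Import Order.TTheory GRing.Theory Num.Theory.
Local Open Scope ring_scope.


Lemma elem_sym0 (R : realFieldType) q (c : 'I_q -> R) : elem_sym 0 c = 1.
Proof.
rewrite /elem_sym (eq_bigl (pred1 set0)) => [|S]; last by rewrite /= cards_eq0.
by rewrite big_pred1_eq big_set0.
Qed.

Lemma elem_sym_gt0 (R : realFieldType) q (c : 'I_q -> R) m : (forall k, 0 < c k) -> (m <= q)%N ->
  0 < elem_sym m c.
Proof.
move=> hc hm.
have : (0 < #|[set A : {set 'I_q} | #|A| == m]|)%N by rewrite card_draws card_ord bin_gt0.
case/card_gt0P => S; rewrite inE => /eqP hS.
rewrite /elem_sym (bigD1 S) /=; last by rewrite hS.
apply: ltr_wpDr; first by apply: sumr_ge0 => i _; apply: prodr_ge0 => j _; exact: ltW.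
by apply: prodr_gt0.
Qed.

Lemma expand (R : realFieldType) q (c : 'I_q -> R) x :
  \prod_(k < q) (c k + x) = \sum_(m < q.+1) elem_sym m c * x ^+ (q - m).
Proof.
rewrite bigA_distr.
transitivity (\sum_(J : {set 'I_q}) (\prod_(i in J) c i) * x ^+ (q - #|J|)).
  apply: eq_bigr => J _; rewrite (bigID (mem J)) /=.
  congr (_ * _); first by apply: eq_bigr => i ->.
  rewrite (eq_bigr (fun _ => x)) => [|i /negbTE -> //].
  rewrite prodr_const; congr (_ ^+ _).
  have h := cardC (mem J); rewrite card_ord in h.
  have -> : #|(fun i : 'I_q => i \notin J)| = #|[predC J]| by apply: eq_card.
  by rewrite -{1}(addKn #|J| #|[predC J]|) h.
rewrite (partition_big (fun J : {set 'I_q} => inord #|J| : 'I_q.+1) predT) //=.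
apply: eq_bigr => m _; rewrite /elem_sym big_distrl /=.
have cq (J : {set 'I_q}) : (#|J| < q.+1)%N by rewrite ltnS -{9}(card_ord q) max_card.
apply: eq_big => J.
  by apply/eqP/eqP => [<-|->]; [rewrite inordK | rewrite inord_val].
by move/eqP=> <-; rewrite inordK.
Qed.

Lemma key (R : realFieldType) q (al be : 'I_q.+1 -> R) x y :
  (forall m n : 'I_q.+1, (m <= n)%N -> al n * be m <= al m * be n) ->
  0 <= x -> x <= y ->
  (\sum_(m < q.+1) al m * x ^+ (q - m)) * (\sum_(n < q.+1) be n * y ^+ (q - n)) <=
  (\sum_(m < q.+1) al m * y ^+ (q - m)) * (\sum_(n < q.+1) be n * x ^+ (q - n)).
Proof.
move=> H hx hxy.
have hy : 0 <= y by apply: le_trans hxy.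
pose u := fun m n : 'I_q.+1 =>
  al m * be n * (y ^+ (q - m) * x ^+ (q - n) - x ^+ (q - m) * y ^+ (q - n)).
have E : (\sum_(m < q.+1) al m * y ^+ (q - m)) * (\sum_(n < q.+1) be n * x ^+ (q - n)) -
  (\sum_(m < q.+1) al m * x ^+ (q - m)) * (\sum_(n < q.+1) be n * y ^+ (q - n))
  = \sum_m \sum_n u m n.
  rewrite !mulr_suml -sumrB; apply: eq_bigr => m _.
  rewrite !mulr_sumr -sumrB; apply: eq_bigr => n _; rewrite /u; ring.
have G : forall m n, 0 <= u m n + u n m.
  move=> m n; wlog hmn : m n / (m <= n)%N.
    move=> W; case: (leqP m n) => h; first exact: W.
    by rewrite addrC; apply: W; apply: ltnW.
  have -> : u m n + u n m = (al m * be n - al n * be m) *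
     (y ^+ (q - m) * x ^+ (q - n) - x ^+ (q - m) * y ^+ (q - n)) by rewrite /u; ring.
  apply: mulr_ge0; rewrite subr_ge0; first exact: H.
  have hm := ltn_ord m; have hn := ltn_ord n.
  have -> : (q - m = (q - n) + (n - m))%N by lia.
  rewrite !exprD.
  have P := lerXn2r (n - m) hx hy hxy.
  have hab : 0 <= x ^+ (q - n) * y ^+ (q - n) by apply: mulr_ge0; apply: exprn_ge0.
  move: P hab; set X := x ^+ (n - m); set Y := y ^+ (n - m);
  set A := x ^+ (q - n); set B := y ^+ (q - n) => P hab /=.
  nra.
rewrite -subr_ge0 E.
have S : 0 <= \sum_m \sum_n (u m n + u n m).
  by apply: sumr_ge0 => m _; apply: sumr_ge0 => n _; apply: G.
have S2 : \sum_m \sum_n (u m n + u n m) = \sum_m \sum_n u m n + \sum_m \sum_n u m n.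
  under eq_bigr do rewrite big_split /=.
  by rewrite big_split /=; congr (_ + _); rewrite exchange_big.
lra.
Qed.

Lemma mono (R : realFieldType) (r : nat -> R) q : (forall m, (0 < m)%N -> (m < q)%N -> r m <= r m.+1) ->
  r 0%N <= r 1%N -> forall m n, (m <= n)%N -> (n <= q)%N -> r m <= r n.
Proof.
move=> H H0 m n; elim: n => [|n IH] hmn hnq.
  by move: hmn; rewrite leqn0 => /eqP ->.
case: (leqP m n) => h; last by have -> : m = n.+1 by lia.
apply: le_trans (IH h (ltnW hnq)) _.
case: n {IH h hmn} hnq => [|n] hnq //; exact: H.
Qed.

Lemma incr (R : realFieldType) q (a b : 'I_q -> R) :
  (forall k, 0 < a k) -> (forall k, 0 < b k) ->
  (forall m : nat, (0 < m)%N -> (m < q)%N ->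
      elem_sym m b / elem_sym m a <= elem_sym m.+1 b / elem_sym m.+1 a) ->
   1 <= elem_sym 1 b / elem_sym 1 a ->
   forall x y : R, 0 < x -> x <= y -> ratfun a b x <= ratfun a b y.
Proof.
move=> ha hb H1 H2 x y hx hxy.
have hy : 0 < y by apply: lt_le_trans hxy.
have pos (c : 'I_q -> R) z : (forall k, 0 < c k) -> 0 < z -> 0 < \prod_(k < q) (c k + z).
  by move=> hc hz; apply: prodr_gt0 => k _; apply: addr_gt0.
rewrite /ratfun ler_pdivrMr ?pos // mulrAC ler_pdivlMr ?pos //.
rewrite !expand; apply: key => //; last exact: ltW.
move=> m n hmn.
pose r k := elem_sym k b / elem_sym k a.
have H0 : r 0%N <= r 1%N by rewrite /r !elem_sym0 divr1.
have M := @mono R r q H1 H0.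
have := M m n hmn (ltn_ord n).
have := @elem_sym_gt0 R q a m ha (ltn_ord m); have := @elem_sym_gt0 R q a n ha (ltn_ord n).
move=> pn pm; rewrite /r ler_pdivrMr // mulrAC ler_pdivlMr //.
by rewrite mulrC [elem_sym m a * _]mulrC.
Qed.


Theorem lemma2 (R : realFieldType) (q : nat) (a b : 'I_q -> R)
  (hq : (0 < q)%N)
  (ha : forall k, 0 < a k) (hb : forall k, 0 < b k) :
  ((forall m : nat, (0 < m)%N -> (m < q)%N ->
      elem_sym m b / elem_sym m a <= elem_sym m.+1 b / elem_sym m.+1 a) ->
   1 <= elem_sym 1 b / elem_sym 1 a ->
   forall x y : R, 0 < x -> x <= y -> ratfun a b x <= ratfun a b y)
  /\
  ((forall m : nat, (0 < m)%N -> (m < q)%N ->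
      elem_sym m.+1 b / elem_sym m.+1 a <= elem_sym m b / elem_sym m a) ->
   elem_sym 1 b / elem_sym 1 a <= 1 ->
   forall x y : R, 0 < x -> x <= y -> ratfun a b y <= ratfun a b x).
Proof.
split; first exact: incr.
move=> H1 H2 x y hx hxy.
have hy : 0 < y by apply: lt_le_trans hxy.
have pos (c : 'I_q -> R) z : (forall k, 0 < c k) -> 0 < z -> 0 < \prod_(k < q) (c k + z).
  by move=> hc hz; apply: prodr_gt0 => k _; apply: addr_gt0.
have rp z : 0 < z -> 0 < ratfun a b z by move=> hz; apply: divr_gt0; apply: pos.
have inv z : ratfun b a z = (ratfun a b z)^-1 by rewrite /ratfun invf_div.
rewrite -lef_pV2 ?posrE ?rp // -!inv.
have es m : (m <= q)%N -> 0 < elem_sym m b / elem_sym m a.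
  by move=> hm; apply: divr_gt0; apply: elem_sym_gt0.
apply: incr => // [m hm hmq|].
  by rewrite -!(invf_div (elem_sym _ b)) lef_pV2 ?posrE ?es // ?H1 //; apply: ltnW.
by rewrite -invf_div invf_ge1 ?es.
Qed.
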